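(* Let $\alpha_1,\dots,\alpha_n\in\mathcal R^n$ and consider the smooth representation $\bigoplus_{i=1}^n\chi^{\alpha_i}$ of $(\mathbb C^* )^n$ on $\mathbb C^n$. (1) It is faithful if and only if the $n\times n$ matrix with entries in $\mathcal R$ whose $(i,k)$-entry is $\alpha_i^k$ has an inverse with entries in $\mathcal R$. (2) If it is faithful, then the representation space has only finitely many orbits and has an open dense orbit; the open dense orbit is unique and isomorphic to $(\mathbb C^* )^n$, and every other orbit has real codimension at least two.
   Context: $\mathcal R$ is the ring of real $2\times2$ matrices $\begin{bmatrix} b&0\\ c&v\end{bmatrix}$ with $b,c\in\mathbb R$, $v\in\mathbb Z$, identified with $\mathbb C\times\mathbb Z$ via $(b+\sqrt{-1}c,v)$. For $g\in\mathbb C^*$ and $\mu=(b+\sqrt{-1}c,v)$, $g^\mu:=|g|^{b+\sqrt{-1}c}(g/|g|)^v$. For $\alpha=(\alpha^1,\dots,\alpha^n)\in\mathcal R^n$, $\chi^\alpha(g_1,\dots,g_n)=\prod_k g_k^{\alpha^k}$. The representation $\bigoplus_i\chi^{\alpha_i}$ acts on $\mathbb C^n$ by $g\cdot(z_1,\dots,z_n)=(\chi^{\alpha_1}(g)z_1,\dots,\chi^{\alpha_n}(g)z_n)$. Matrices over $\mathcal R$ are multiplied as usual (equivalently as real $2n\times 2n$ matrices). *)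

(* Defs.v *)
From HB Require Import structures.
From mathcomp Require Import all_boot all_order all_algebra.
From mathcomp Require Import all_classical all_reals.
From mathcomp Require Import topology normedtype sequences derive exp trigo.
From mathcomp Require Import complex.
Set Implicit Arguments. Unset Strict Implicit. Unset Printing Implicit Defensive.
Import Order.TTheory GRing.Theory Num.Theory.
Import numFieldTopology.Exports numFieldNormedType.Exports.
Local Open Scope ring_scope.
Local Open Scope complex_scope.

(* The usual (Euclidean) topology on C = R[i], the metric topology of its
   norm |x +i* y| = sqrt(x^2+y^2); C^n = 'rV[C]_n then carries the product
   topology (mathcomp-analysis' matrix topology). *)
HB.instance Definition _ (R : realType) :=
  PseudoPointedMetric.copy (complex R) (complex R)^o.

Section Defs.
Variable R : realType.
Local Notation C := (complex R).

(* An element (b + sqrt(-1) c, v) of \mathcal R, i.e. the real 2x2 matrix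
      [ b 0 ]
      [ c v ]   with b c : R and v : int. *)
Record Rel := mkRel { rb : R; rc : R; rv : int }.

Definition Rel_add (x y : Rel) : Rel :=
  mkRel (rb x + rb y) (rc x + rc y) (rv x + rv y).
(* matrix product [b 0; c v] [b' 0; c' v'] = [b b' 0; c b' + v c'  v v'] *)
Definition Rel_mul (x y : Rel) : Rel :=
  mkRel (rb x * rb y) (rc x * rb y + (rv x)%:~R * rc y) (rv x * rv y).
Definition Rel0 : Rel := mkRel 0 0 0.
Definition Rel1 : Rel := mkRel 1 0 1.

Definition Rmx (n : nat) := 'I_n -> 'I_n -> Rel.
Definition Rmx_mul n (A B : Rmx n) : Rmx n :=
  fun i k => \big[Rel_add/Rel0]_(j : 'I_n) Rel_mul (A i j) (B j k).
Definition Rmx1 n : Rmx n := fun i k => if i == k then Rel1 else Rel0.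
Definition Rmx_invertible n (A : Rmx n) : Prop :=
  exists B : Rmx n, Rmx_mul A B = @Rmx1 n /\ Rmx_mul B A = @Rmx1 n.

(* g^mu = |g|^(b + sqrt(-1) c) * (g/|g|)^v   for g <> 0, where
   |g|^(b + i c) = exp((b + i c) ln|g|) = e^(b ln|g|) (cos(c ln|g|) + i sin(c ln|g|)) *)
Definition cpowR (g : C) (mu : Rel) : C :=
  let r := ComplexField.Normc.normc g in let t := ln r in
  ((expR (rb mu * t))%:C * (cos (rc mu * t) +i* sin (rc mu * t)))
  * (g / r%:C) ^ (rv mu).

Definition torus (n : nat) : set ('I_n -> C) := [set g | forall k, g k != 0].
Arguments torus : clear implicits.

Definition chi n (alpha : 'I_n -> Rel) (g : 'I_n -> C) : C :=
  \prod_(k : 'I_n) cpowR (g k) (alpha k).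

(* the representation (+)_i chi^(alpha_i) of (C^* )^n; alpha i k = alpha_i^k *)
Definition rep n (alpha : Rmx n) (g : 'I_n -> C) : 'M[C]_n :=
  diag_mx (\row_i chi (alpha i) g).

Definition faithful_rep n (alpha : Rmx n) : Prop :=
  forall g h : 'I_n -> C,
    torus n g -> torus n h -> rep alpha g = rep alpha h -> g = h.

Definition tact n (alpha : Rmx n) (g : 'I_n -> C) (z : 'rV[C]_n) : 'rV[C]_n :=
  \row_i (chi (alpha i) g * z 0 i).

Definition torus_orbit n (alpha : Rmx n) (z : 'rV[C]_n) : set 'rV[C]_n :=
  [set tact alpha g z | g in torus n].

Definition torus_orbits n (alpha : Rmx n) : set (set 'rV[C]_n) :=
  [set torus_orbit alpha z | z in [set: 'rV[C]_n]].

(* One-parameter subgroups of (C^* )^n through the identity, spanning its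
   real Lie algebra R^(2n):  s |-> (1,..,e^s,..,1)  and  s |-> (1,..,e^(i s),..,1). *)
Definition opsub n (d : 'I_(n + n)) (s : R) : 'I_n -> C :=
  fun k => match fintype.split d with
           | inl j => if j == k then (expR s)%:C else 1
           | inr j => if j == k then cos s +i* sin s else 1
           end.

(* real coordinates of C^n = R^(n+n):  x_i = Re z_i,  x_(n+i) = Im z_i *)
Definition realcoord n (z : 'rV[C]_n) (e : 'I_(n + n)) : R :=
  match fintype.split e with inl i => complex.Re (z 0 i) | inr i => complex.Im (z 0 i) end.

(* Real Jacobian (at the identity) of the torus_orbit map g |-> g.z, in the
   coordinates above: row d = derivative along the d-th one-parameter subgroup. *)
Definition orbit_jacobian n (alpha : Rmx n) (z : 'rV[C]_n) : 'M[R]_(n + n) :=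
  \matrix_(d, e) derive1 (fun s : R => realcoord (tact alpha (opsub d s) z) e) 0.

(* real dimension of the torus_orbit through z = rank of the differential of the
   torus_orbit map at the identity; its real codimension in C^n = R^(n+n) *)
Definition orbit_dim n (alpha : Rmx n) (z : 'rV[C]_n) : nat :=
  \rank (orbit_jacobian alpha z).
Definition orbit_codim n (alpha : Rmx n) (z : 'rV[C]_n) : nat :=
  (n + n - orbit_dim alpha z)%N.

End Defs.
Arguments torus : clear implicits.

(* Main.v *)
Require Import Defs.
From HB Require Import structures.
From mathcomp Require Import all_boot all_order all_algebra.
From mathcomp Require Import all_classical all_reals.
From mathcomp Require Import topology normedtype sequences derive exp trigo.
From mathcomp Require Import complex.
From mathcomp Require Import lra zify.
Import Order.TTheory GRing.Theory Num.Theory.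
Import numFieldTopology.Exports numFieldNormedType.Exports.
Local Open Scope ring_scope.
Local Open Scope classical_set_scope.
Import ComplexField.Normc.
Set Implicit Arguments. Unset Strict Implicit. Unset Printing Implicit Defensive.
Section Polar.
Variable R : realType.
Local Notation C := (complex R).
Local Open Scope complex_scope.

Definition E (t : R) : C := cos t +i* sin t.

Lemma ED s t : E (s + t) = E s * E t.
Proof. rewrite /E cosD sinD; simpc; by rewrite [_ + cos s * sin t]addrC. Qed.

Lemma E0 : E 0 = 1.
Proof. by rewrite /E cos0 sin0. Qed.

Lemma normc_E t : normc (E t) = 1.
Proof. by rewrite /normc /E cos2Dsin2 sqrtr1. Qed.

Lemma normc_real (x : R) : 0 <= x -> normc (x%:C) = x.
Proof. move=> x0; rewrite /normc /= expr0n addr0 sqrtr_sqr ger0_norm //. Qed.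

Lemma normc_gt0 (g : C) : g != 0 -> 0 < normc g.
Proof.
move=> g0; rewrite lt_def; apply/andP; split.
  by apply/eqP => /eq0_normc; apply/eqP.
by case: g {g0} => a b; rewrite /normc sqrtr_ge0.
Qed.

Lemma E_neq0 t : E t != 0.
Proof. apply/eqP => h; have := normc_E t; rewrite h normc0 => /eqP; by rewrite eq_sym oner_eq0. Qed.

Lemma EN t : E (- t) = (E t)^-1.
Proof.
apply: (mulfI (E_neq0 t)); rewrite -ED subrr E0 divff //; exact: E_neq0.
Qed.

Lemma EXn t (m : nat) : E t ^+ m = E (m%:R * t).
Proof.
elim: m => [|m IH]; first by rewrite expr0 mul0r E0.
by rewrite exprS IH -ED -[in RHS](add1n m) natrD mulrDl mul1r.
Qed.

Lemma EX t (z : int) : E t ^ z = E (z%:~R * t).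
Proof.
case: z => m; first by rewrite -exprnP EXn.
by rewrite NegzE -exprnN EXn -EN rmorphN /= mulNr.
Qed.

Lemma E_prod (I : finType) (f : I -> R) : \prod_(i : I) E (f i) = E (\sum_(i : I) f i).
Proof. by rewrite (big_morph E ED E0). Qed.

Lemma normcXz (u : C) (z : int) : normc (u ^ z) = normc u ^ z.
Proof.
have Hn : forall m : nat, normc (u ^+ m) = normc u ^+ m.
  by elim=> [|m IH]; rewrite ?expr0 ?normc1 // !exprS normcM IH.
case: z => m; first by rewrite -!exprnP Hn.
by rewrite NegzE -!exprnN normcV Hn.
Qed.

Lemma realC_neq0 (x : R) : x != 0 -> x%:C != 0 :> C.
Proof. by move=> x0; apply/eqP => -[/eqP]; rewrite (negbTE x0). Qed.

Lemma cpowR_polar (x : R) (u : C) (mu : Rel R) : normc u = 1 ->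
  cpowR ((expR x)%:C * u) mu = (expR (rb mu * x))%:C * E (rc mu * x) * u ^ rv mu.
Proof.
move=> hu; rewrite /cpowR normcM hu mulr1 normc_real ?expR_ge0 // expRK.
rewrite [_ * u]mulrC mulfK //; exact/realC_neq0/lt0r_neq0/expR_gt0.
Qed.

Lemma polarE (g : C) : g != 0 -> g = (expR (ln (normc g)))%:C * (g / (normc g)%:C).
Proof.
move=> g0; rewrite lnK; last by rewrite posrE normc_gt0.
rewrite mulrC divfK //; exact/realC_neq0/lt0r_neq0/normc_gt0.
Qed.

Lemma normc_unit (g : C) : g != 0 -> normc (g / (normc g)%:C) = 1.
Proof.
move=> g0; rewrite normcM normcV normc_real; last exact/ltW/normc_gt0.
by rewrite divff //; exact/lt0r_neq0/normc_gt0.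
Qed.

Definition Pol n (x : 'I_n -> R) (u : 'I_n -> C) : 'I_n -> C :=
  fun k => (expR (x k))%:C * u k.

Definition Xp n (mu : 'I_n -> Rel R) (x : 'I_n -> R) : R :=
  \sum_k rb (mu k) * x k.
Definition Up n (mu : 'I_n -> Rel R) (x : 'I_n -> R) (u : 'I_n -> C) : C :=
  E (\sum_k rc (mu k) * x k) * \prod_k u k ^ rv (mu k).

Lemma expRC_prod n (f : 'I_n -> R) :
  \prod_k (expR (f k))%:C = (expR (\sum_k f k))%:C :> C.
Proof.
apply: (big_ind2 (fun (a : C) (b : R) => a = (expR b)%:C)).
- by rewrite expR0.
- by move=> a1 b1 a2 b2 -> ->; rewrite expRD rmorphM.
- by [].
Qed.

Lemma chi_polar n (mu : 'I_n -> Rel R) (x : 'I_n -> R) (u : 'I_n -> C) : (forall k, normc (u k) = 1) ->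
  chi mu (Pol x u) = (expR (Xp mu x))%:C * Up mu x u.
Proof.
move=> hu; rewrite /chi /Pol.
rewrite (eq_bigr (fun k => (expR (rb (mu k) * x k))%:C * E (rc (mu k) * x k) * u k ^ rv (mu k))); last first.
  by move=> k _; rewrite cpowR_polar.
by rewrite !big_split /= expRC_prod E_prod /Up mulrA.
Qed.

Lemma normc_Up n (mu : 'I_n -> Rel R) (x : 'I_n -> R) (u : 'I_n -> C) : (forall k, normc (u k) = 1) ->
  normc (Up mu x u) = 1.
Proof.
move=> hu; rewrite /Up normcM normc_E mul1r.
rewrite (big_morph (@normc R) (id1 := 1) (op1 := *%R)) ?normc1 //; last exact: normcM.
by rewrite big1 // => k _; rewrite normcXz hu exp1rz.
Qed.

End Polar.

Section Comp.
Variable R : realType.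
Local Notation C := (complex R).
Local Open Scope complex_scope.

Lemma rb_big (I : Type) (r : seq I) (P : pred I) (F : I -> Rel R) :
  rb (\big[@Rel_add R/Rel0 R]_(i <- r | P i) F i) = \sum_(i <- r | P i) rb (F i).
Proof. by apply: big_morph. Qed.
Lemma rc_big (I : Type) (r : seq I) (P : pred I) (F : I -> Rel R) :
  rc (\big[@Rel_add R/Rel0 R]_(i <- r | P i) F i) = \sum_(i <- r | P i) rc (F i).
Proof. by apply: big_morph. Qed.
Lemma rv_big (I : Type) (r : seq I) (P : pred I) (F : I -> Rel R) :
  rv (\big[@Rel_add R/Rel0 R]_(i <- r | P i) F i) = \sum_(i <- r | P i) rv (F i).
Proof. by apply: big_morph. Qed.

Lemma Xp_mul n (A B : Rmx R n) i (x : 'I_n -> R) :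
  Xp (Rmx_mul A B i) x = Xp (A i) (fun j => Xp (B j) x).
Proof.
rewrite /Xp /Rmx_mul.
under eq_bigr do rewrite rb_big /= mulr_suml.
rewrite exchange_big /=; apply: eq_bigr => j _.
by rewrite mulr_sumr; apply: eq_bigr => k _; rewrite mulrA.
Qed.

Lemma prodXz (I : Type) (r : seq I) (P : pred I) (F : I -> C) (z : int) :
  (\prod_(i <- r | P i) F i) ^ z = \prod_(i <- r | P i) F i ^ z.
Proof.
apply: (big_morph (fun y : C => y ^ z)); last exact: exp1rz.
by move=> a b; rewrite expfzMl.
Qed.

Lemma prod_exprz (I : Type) (r : seq I) (P : pred I) (e : I -> int) (y : C) :
  y != 0 -> \prod_(i <- r | P i) y ^ e i = y ^ (\sum_(i <- r | P i) e i).
Proof.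
move=> y0; symmetry; apply: (big_morph (fun k : int => y ^ k)); last exact: expr0z.
by move=> a b; rewrite exprzDr // unitfE.
Qed.

Lemma Up_mul n (A B : Rmx R n) i (x : 'I_n -> R) (u : 'I_n -> C) :
  (forall k, u k != 0) ->
  Up (Rmx_mul A B i) x u = Up (A i) (fun j => Xp (B j) x) (fun j => Up (B j) x u).
Proof.
move=> u0; rewrite /Up.
under [in RHS]eq_bigr do rewrite expfzMl EX prodXz.
rewrite big_split /= E_prod mulrA -ED.
rewrite (exchange_big _ _ _ _ _ (fun j k => (u k ^ rv (B j k)) ^ rv (A i j))) /=.
congr (E _ * _).
  rewrite /Xp -big_split /=.
  under eq_bigr do rewrite rc_big /= mulr_suml.
  rewrite exchange_big /=; apply: eq_bigr => j _.
  rewrite !mulr_sumr -big_split /=; apply: eq_bigr => k _.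
  by rewrite mulrDl !mulrA.
apply: eq_bigr => k _.
rewrite rv_big -prod_exprz //; apply: eq_bigr => j _.
by rewrite exprz_exp mulrC.
Qed.

Lemma chi_mul n (A B : Rmx R n) i (g : 'I_n -> C) : torus R n g ->
  chi (Rmx_mul A B i) g = chi (A i) (fun j => chi (B j) g).
Proof.
move=> tg.
pose x := fun k => ln (normc (g k)).
pose u := fun k => g k / (normc (g k))%:C.
have gE : g = Pol x u by apply: funext => k; rewrite /Pol /x /u -polarE.
have hu : forall k, normc (u k) = 1 by move=> k; exact: normc_unit.
have u0 : forall k, u k != 0.
  by move=> k; apply/eqP => h; have := hu k; rewrite h normc0 => /eqP; rewrite eq_sym oner_eq0.
rewrite gE.
have -> : (fun j => chi (B j) (Pol x u)) = Pol (fun j => Xp (B j) x) (fun j => Up (B j) x u).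
  by apply: funext => j; rewrite chi_polar.
rewrite !chi_polar //; last by move=> j; rewrite normc_Up.
by rewrite Xp_mul Up_mul.
Qed.

Lemma chi_neq0 n (mu : 'I_n -> Rel R) (g : 'I_n -> C) : torus R n g ->
  chi mu g != 0.
Proof.
move=> tg.
pose x := fun k => ln (normc (g k)).
pose u := fun k => g k / (normc (g k))%:C.
have gE : g = Pol x u by apply: funext => k; rewrite /Pol /x /u -polarE.
have hu : forall k, normc (u k) = 1 by move=> k; exact: normc_unit.
rewrite gE chi_polar // mulf_neq0 //; first exact/realC_neq0/lt0r_neq0/expR_gt0.
by apply/eqP => h; have := normc_Up mu x hu; rewrite h normc0 => /eqP; rewrite eq_sym oner_eq0.
Qed.

Lemma cpowR_Rel0 (g : C) : cpowR g (Rel0 R) = 1.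
Proof. by rewrite /cpowR /= !mul0r expR0 cos0 sin0 expr0z !mulr1. Qed.

Lemma cpowR_Rel1 (g : C) : g != 0 -> cpowR g (Rel1 R) = g.
Proof.
move=> g0; rewrite /cpowR /= !mul0r mul1r cos0 sin0 expr1z mulr1.
rewrite lnK; last by rewrite posrE normc_gt0.
rewrite mulrC divfK //; exact/realC_neq0/lt0r_neq0/normc_gt0.
Qed.

Lemma chi_Rmx1 n i (g : 'I_n -> C) : torus R n g -> chi (@Rmx1 R n i) g = g i.
Proof.
move=> tg; rewrite /chi (bigD1 i) //= /Rmx1 eqxx cpowR_Rel1 // big1 ?mulr1 //.
by move=> k /negbTE ki; rewrite eq_sym ki cpowR_Rel0.
Qed.

End Comp.

Section Rep.
Variable R : realType.
Local Notation C := (complex R).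
Lemma rep_eq n (alpha : Rmx R n) g h :
  rep alpha g = rep alpha h <-> forall i, chi (alpha i) g = chi (alpha i) h.
Proof.
split => [E i|E].
  move/matrixP: E => /(_ i i). rewrite /rep !mxE eqxx !mulr1n; exact: id.
rewrite /rep; apply: f_equal; apply/rowP => i. rewrite !mxE; exact: E.
Qed.

Lemma inv_faithful n (alpha : Rmx R n) : Rmx_invertible alpha -> faithful_rep alpha.
Proof.
move=> [B [_ hBA]] g h tg th /rep_eq E.
apply: funext => i.
rewrite -(chi_Rmx1 i tg) -(chi_Rmx1 i th) -hBA (chi_mul _ _ _ tg) (chi_mul _ _ _ th).
have -> : (fun j => chi (alpha j) g) = (fun j => chi (alpha j) h).
  by apply: funext => j; exact: E.
reflexivity.
Qed.

Lemma inv_surj n (alpha : Rmx R n) : Rmx_invertible alpha ->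
  forall w : 'I_n -> C, torus R n w ->
  exists2 g, torus R n g & forall i, chi (alpha i) g = w i.
Proof.
move=> [B [hAB _]] w tw; exists (fun j => chi (B j) w).
  by move=> j; exact: chi_neq0.
by move=> i; rewrite -(chi_mul _ _ _ tw) hAB (chi_Rmx1 _ tw).
Qed.
End Rep.

Section Faith.
Variable R : realType.
Local Notation C := (complex R).
Local Open Scope complex_scope.

Lemma ker_of_nonunit n (M : 'M[R]_n) : M \notin unitmx ->
  exists2 v : 'rV_n, v != 0 & v *m M = 0.
Proof. by move=> h; apply/det0P; move: h; rewrite unitmxE unitfE negbK. Qed.

Definition gx n (x t : 'rV[R]_n) : 'I_n -> C :=
  fun k => (expR (x 0 k))%:C * E (t 0 k).

Lemma gx_torus n (x t : 'rV[R]_n) : torus R n (gx x t).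
Proof. by move=> k; rewrite mulf_neq0 ?E_neq0 //; exact/realC_neq0/lt0r_neq0/expR_gt0. Qed.

Lemma gx00 n k : gx (0 : 'rV[R]_n) 0 k = 1.
Proof. by rewrite /gx !mxE expR0 E0 mulr1. Qed.

Lemma E2pi : E (pi *+ 2) = 1 :> C.
Proof. by rewrite /E cos2pi sin2pi. Qed.

Lemma E_eq1 (t : R) : E t = 1 -> t / (pi *+ 2) \is a Num.int.
Proof.
move=> ht; set p := pi *+ 2.
have p0 : 0 < p by rewrite /p pmulrn_lgt0 // pi_gt0.
set m := Num.floor (t / p).
set r := t - m%:~R * p.
have hr : E r = 1.
  rewrite /r ED ht mul1r -mulNr -rmorphN /= -EX E2pi exp1rz //.
have cr : cos r = 1 by move/(congr1 (@complex.Re R)): hr.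
have sr : sin r = 0 by move/(congr1 (@complex.Im R)): hr.
have /andP[h1 h2] := floor_itv (t / p).
rewrite -/m ler_pdivlMr // in h1; rewrite ltr_pdivrMr // intrD mulrDl mul1r in h2.
have r0 : 0 <= r by rewrite /r subr_ge0.
have rp : r < p by rewrite /r ltrBlDr addrC.
suff rz : r = 0.
  have -> : t = m%:~R * p by move: rz; rewrite /r => /eqP; rewrite subr_eq0 => /eqP.
  by rewrite mulfK ?intr_int // lt0r_neq0.
have pi0 := pi_gt0 R.
case: (ltgtP r 0) => [|rpos|//]; first by rewrite ltNge r0.
case: (ltgtP r pi) => [rl|rg|re].
- by have := sin_gt0_pi (R:=R) (x:=r); rewrite sr ltxx rpos rl => /(_ isT).
- have := sin_gt0_pi (R:=R) (x:=r - pi).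
  rewrite sinB sr cr cospi sinpi mul0r mulr0 subr0 ltxx.
  rewrite subr_gt0 rg /= ltrBlDr => /(_ _) h; exfalso; apply: notF; apply: h.
  by move: rp; rewrite /p mulr2n.
- by move: cr; rewrite re cospi => h; lra.
Qed.

Variable n : nat.
Variable alpha : Rmx R n.
Definition Bm : 'M[R]_n := \matrix_(i, k) rb (alpha i k).
Definition Cm : 'M[R]_n := \matrix_(i, k) rc (alpha i k).
Definition Vm : 'M[R]_n := \matrix_(i, k) (rv (alpha i k))%:~R.

Lemma chi_gx (x t : 'rV[R]_n) i :
  chi (alpha i) (gx x t) = gx (x *m Bm^T) (x *m Cm^T + t *m Vm^T) i.
Proof.
have -> : gx x t = Pol (fun k => x 0 k) (fun k => E (t 0 k)) by [].
rewrite chi_polar; last by move=> k; exact: normc_E.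
rewrite /gx /Up /Xp.
under eq_bigr do rewrite EX.
rewrite E_prod -ED !mxE.
have h1 : \sum_k rb (alpha i k) * x 0 k = \sum_j x 0 j * Bm^T j i.
  by apply: eq_bigr => k _; rewrite !mxE mulrC.
have h2 : \sum_k rc (alpha i k) * x 0 k = \sum_j x 0 j * Cm^T j i.
  by apply: eq_bigr => k _; rewrite !mxE mulrC.
have h3 : \sum_k (rv (alpha i k))%:~R * t 0 k = \sum_j t 0 j * Vm^T j i.
  by apply: eq_bigr => k _; rewrite !mxE mulrC.
by rewrite h1 h2 h3.
Qed.

Hypothesis hf : faithful_rep alpha.

Lemma faith_ker (x t : 'rV[R]_n) :
  x *m Bm^T = 0 -> (forall i, E ((x *m Cm^T + t *m Vm^T) 0 i) = 1) ->
  forall k, gx x t k = 1.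
Proof.
move=> hx ht.
have := hf (gx_torus x t) (gx_torus 0 0).
move=> H; have {}H : gx x t = gx 0 0.
  apply: H; apply/rep_eq => i; rewrite !chi_gx /gx hx ht !mul0mx addr0 !mxE.
  by rewrite expR0 E0.
by move=> k; rewrite H gx00.
Qed.

Lemma gx_eq1_x (x t : 'rV[R]_n) k : gx x t k = 1 -> x 0 k = 0.
Proof.
move/(congr1 (@normc R)); rewrite /gx normcM normc_E mulr1 normc_real ?expR_ge0 // normc1 => h.
by rewrite -(expRK (x 0 k)) h ln1.
Qed.

Lemma gx_eq1_t (t : 'rV[R]_n) k : gx 0 t k = 1 -> E (t 0 k) = 1.
Proof. by rewrite /gx mxE expR0 rmorph1 mul1r. Qed.

Lemma Epi_neq1 : E pi != 1 :> C.
Proof.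
apply/eqP; move/(congr1 (@complex.Re R)); rewrite /E /= cospi => h; lra.
Qed.

Lemma nz_row (y : 'rV[R]_n) : y != 0 -> exists k, y 0 k != 0.
Proof.
move=> y0; apply/existsP; apply: contraNT y0 => /existsPn h.
by apply/eqP/rowP => k; rewrite mxE; exact/eqP/negbNE/h.
Qed.

Lemma V_unit : Vm^T \in unitmx.
Proof.
apply/negPn/negP => hV; have [y y0 hy] := ker_of_nonunit hV.
have [k yk] := nz_row y0.
set t := (pi / y 0 k) *: y.
have htV : t *m Vm^T = 0 by rewrite /t -scalemxAl hy scaler0.
have h := @faith_ker 0 t (mul0mx _ _).
have {}h : forall k, gx 0 t k = 1.
  apply: h => i; rewrite mul0mx add0r htV mxE; exact: E0.
have := gx_eq1_t (h k); rewrite /t mxE mulfVK //; apply/eqP; exact: Epi_neq1.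
Qed.

Lemma Vm_unit : Vm \in unitmx.
Proof. by rewrite -unitmx_tr V_unit. Qed.

Lemma B_unit : Bm^T \in unitmx.
Proof.
apply/negPn/negP => hB; have [x0 x00 hx] := ker_of_nonunit hB.
set t := - (x0 *m Cm^T) *m invmx (Vm^T).
have ht : x0 *m Cm^T + t *m Vm^T = 0.
  by rewrite /t mulmxKV ?V_unit // subrr.
have h := @faith_ker x0 t hx.
have {}h : forall k, gx x0 t k = 1 by apply: h => i; rewrite ht mxE; exact: E0.
move/eqP: x00; apply; apply/rowP => k; rewrite mxE; exact: gx_eq1_x (h k).
Qed.

Lemma Bm_unit : Bm \in unitmx.
Proof. by rewrite -unitmx_tr B_unit. Qed.

Lemma V_int j k : invmx (Vm^T) j k \is a Num.int.
Proof.
set W := invmx (Vm^T).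
pose t : 'rV[R]_n := (pi *+ 2) *: (delta_mx 0 j *m W).
have htV : t *m Vm^T = (pi *+ 2) *: delta_mx 0 j.
  by rewrite /t -scalemxAl /W mulmxKV ?V_unit.
have h := @faith_ker 0 t (mul0mx _ _).
have {}h : forall k, gx 0 t k = 1.
  apply: h => i; rewrite mul0mx add0r htV !mxE.
  by case: (i == j); rewrite ?mulr1 ?mulr0 ?E2pi ?E0.
have := E_eq1 (gx_eq1_t (h k)).
by rewrite /t mxE -rowE mxE [pi *+ 2 * _]mulrC mulfK // lt0r_neq0 // pmulrn_lgt0 ?pi_gt0.
Qed.

Definition Vi := invmx Vm.
Definition Bi := invmx Bm.
Definition Ci := - (Vi *m Cm *m Bi).
Lemma Vi_int i k : Vi i k \is a Num.int.
Proof. by rewrite /Vi -[Vm]trmxK -trmx_inv mxE; exact: V_int. Qed.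
Lemma floorVi i k : (Num.floor (Vi i k))%:~R = Vi i k.
Proof. exact/floorK/Vi_int. Qed.

Definition Ainv : Rmx R n := fun i k => mkRel (Bi i k) (Ci i k) (Num.floor (Vi i k)).

Lemma Rel_ext (x y : Rel R) : rb x = rb y -> rc x = rc y -> rv x = rv y -> x = y.
Proof. by case: x => ? ? ?; case: y => ? ? ? /= -> -> ->. Qed.

Lemma Rmx1_rb i k : rb (@Rmx1 R n i k) = (i == k)%:R.
Proof. by rewrite /Rmx1; case: (i == k). Qed.
Lemma Rmx1_rc i k : rc (@Rmx1 R n i k) = 0.
Proof. by rewrite /Rmx1; case: (i == k). Qed.
Lemma Rmx1_rv i k : rv (@Rmx1 R n i k) = (i == k)%:R.
Proof. by rewrite /Rmx1; case: (i == k). Qed.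

Lemma mul_A_Ainv : Rmx_mul alpha Ainv = @Rmx1 R n.
Proof.
apply: funext => i; apply: funext => k; apply: Rel_ext.
- rewrite rb_big Rmx1_rb /=.
  transitivity ((Bm *m Bi) i k).
    by rewrite mxE; apply: eq_bigr => j _; rewrite mxE.
  by rewrite /Bi mulmxV ?Bm_unit // mxE.
- rewrite rc_big Rmx1_rc /=.
  transitivity ((Cm *m Bi + Vm *m Ci) i k).
    by rewrite !mxE -big_split; apply: eq_bigr => j _; rewrite !mxE.
  by rewrite /Ci mulmxN !mulmxA /Vi mulmxV ?Vm_unit // mul1mx subrr mxE.
- apply: (@intr_inj R); rewrite rv_big Rmx1_rv /= rmorph_sum.
  transitivity ((Vm *m Vi) i k).
    by rewrite mxE; apply: eq_bigr => j _; rewrite mxE rmorphM /= floorVi.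
  by rewrite /Vi mulmxV ?Vm_unit // mxE; case: (i == k).
Qed.

Lemma mul_Ainv_A : Rmx_mul Ainv alpha = @Rmx1 R n.
Proof.
apply: funext => i; apply: funext => k; apply: Rel_ext.
- rewrite rb_big Rmx1_rb /=.
  transitivity ((Bi *m Bm) i k).
    by rewrite mxE; apply: eq_bigr => j _; rewrite mxE.
  by rewrite /Bi mulVmx ?Bm_unit // mxE.
- rewrite rc_big Rmx1_rc /=.
  transitivity ((Ci *m Bm + Vi *m Cm) i k).
    by rewrite !mxE -big_split; apply: eq_bigr => j _; rewrite !mxE floorVi.
  by rewrite /Ci mulNmx -!mulmxA /Bi mulVmx ?Bm_unit // mulmx1 addNr mxE.
- apply: (@intr_inj R); rewrite rv_big Rmx1_rv /= rmorph_sum.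
  transitivity ((Vi *m Vm) i k).
    by rewrite mxE; apply: eq_bigr => j _; rewrite mxE rmorphM /= floorVi.
  by rewrite /Vi mulVmx ?Vm_unit // mxE; case: (i == k).
Qed.

Lemma faithful_inv : Rmx_invertible alpha.
Proof. exists Ainv; split; [exact: mul_A_Ainv | exact: mul_Ainv_A]. Qed.

End Faith.

Section Orb.
Variable R : realType.
Local Notation C := (complex R).
Local Open Scope complex_scope.
Variable n : nat.
Variable alpha : Rmx R n.
Hypothesis hinv : Rmx_invertible alpha.

Lemma orbitE (z : 'rV[C]_n) :
  torus_orbit alpha z = [set y | forall i, (y 0 i == 0) = (z 0 i == 0)].
Proof.
apply/seteqP; split.
  move=> y [g tg <-] i; rewrite /tact mxE mulf_eq0.
  by rewrite (negbTE (chi_neq0 _ tg)).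
move=> y /= hy.
pose w := fun i => if z 0 i == 0 then 1 else y 0 i / z 0 i.
have tw : torus R n w.
  move=> i; rewrite /w; case: ifP => hz; first exact: oner_neq0.
  by rewrite mulf_neq0 ?invr_eq0 ?hy ?hz.
have [g tg hg] := inv_surj hinv tw.
exists g => //; apply/rowP => i; rewrite /tact mxE hg /w.
case: ifP => hz; first by move: (hy i); rewrite hz mul1r => /eqP ->; move/eqP: hz ->.
by rewrite divfK ?hz.
Qed.

Definition ones : 'rV[C]_n := const_mx 1.

Lemma orbit_ones : torus_orbit alpha ones = [set y | forall i, y 0 i != 0].
Proof.
rewrite orbitE; apply/seteqP; split => y /= h i.
  by have := h i; rewrite /ones mxE oner_eq0 => ->.
by rewrite /ones mxE oner_eq0; apply/negbTE.
Qed.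

End Orb.

Section Topo.
Variable R : realType.
Local Notation C := (complex R).
Variable n : nat.

Definition perturb (y : 'rV[C]_n) (e : C) : 'rV[C]_n :=
  \row_i (if y 0 i == 0 then e / 2 else y 0 i).

Lemma perturb_nz y (e : C) : 0 < e -> forall i, perturb y e 0 i != 0.
Proof.
move=> e0 i; rewrite /perturb mxE; case: ifP => [_|/negbT //].
by rewrite mulf_neq0 ?invr_eq0 ?lt0r_neq0 // ltr0n.
Qed.

Lemma perturb_ball y (e : C) : 0 < e -> ball y e (perturb y e).
Proof.
move=> e0; split => // i j; rewrite (ord1 i) /perturb mxE.
case: ifP => [/eqP ->|_]; last by rewrite /ball /= subrr normr0.
rewrite /ball /= sub0r normrN ger0_norm; last by rewrite divr_ge0 ?ltW // ler0n.
by have := (midf_lt e0).2; rewrite add0r.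
Qed.

Lemma open_nz : open [set y : 'rV[C]_n | forall i, y 0 i != 0].
Proof.
rewrite openE => y hy; rewrite /interior.
apply: (@filter_forall _ 'I_n (fun i => [set y' : 'rV[C]_n | y' 0 i != 0]) (nbhs y) _) => i.
apply/nbhs_ballP; exists `|y 0 i|; first by rewrite /= normr_gt0; exact: hy.
move=> y' [_ /(_ 0 i) hb]; apply/eqP => h; move: hb; rewrite /ball /= h subr0 ltxx.
by [].
Qed.

Lemma dense_nz : closure [set y : 'rV[C]_n | forall i, y 0 i != 0] = setT.
Proof.
apply/seteqP; split => // y _ B /nbhs_ballP [e e0 hB].
by exists (perturb y e); split; [exact: perturb_nz | apply: hB; exact: perturb_ball].
Qed.

Lemma open_has_zero (A : set 'rV[C]_n) (z : 'rV[C]_n) i :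
  open A -> A z -> z 0 i = 0 -> exists2 y, A y & y 0 i != 0.
Proof.
move=> oA Az zi; have := oA z Az => /nbhs_ballP [e e0 hB].
exists (perturb z e); [apply: hB; exact: perturb_ball | exact: perturb_nz].
Qed.

End Topo.

Lemma rank_zero_cols (F : fieldType) m k (M : 'M[F]_(m,k)) (c1 c2 : 'I_k) :
  c1 != c2 -> (forall a, M a c1 = 0) -> (forall a, M a c2 = 0) -> (\rank M <= k - 2)%N.
Proof.
move=> c12 h1 h2.
pose S : {set 'I_k} := [set c1; c2]%SET.
pose D : 'M[F]_k := \sum_(c in ~: S) delta_mx c c.
have Dij : forall j b, D j b = ((j == b) && (b \in ~: S))%:R.
  move=> j b; rewrite summxE.
  under eq_bigr => c _ do rewrite mxE.
  case: (boolP (b \in ~: S)) => hb.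
    rewrite (bigD1 b) //= eqxx andbT big1 ?addr0 ?andbT //.
    by move=> c /andP[_ cb]; rewrite [b == c]eq_sym (negbTE cb) andbF.
  rewrite big1 ?andbF // => c hc; case: (b =P c) => [ecb|_]; last by rewrite andbF.
  by move: hb; rewrite ecb hc.
have MD : M *m D = M.
  apply/matrixP => a b; rewrite mxE.
  under eq_bigr => j _ do rewrite Dij.
  rewrite (bigD1 b) //= big1 ?addr0; last first.
    by move=> j /negbTE jb; rewrite jb /= mulr0.
  rewrite eqxx /=; case: (boolP (b \in ~: S)) => hb; first by rewrite mulr1.
  move: hb; rewrite !inE negbK => /orP[] /eqP ->; rewrite mulr0 ?h1 ?h2 //.
have rD : (\rank D <= \sum_(c in ~: S) 1)%N.
  rewrite /D; apply: (big_ind2 (fun (A : 'M[F]_k) (x : nat) => (\rank A <= x)%N)).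
  - by rewrite mxrank0.
  - move=> A1 x1 A2 x2 r1 r2; exact: leq_trans (mxrank_add _ _) (leq_add r1 r2).
  - by move=> c _; rewrite mxrank_delta.
rewrite sum1_card in rD.
have cS : #|~: S| = (k - 2)%N.
  have := cardsC S; rewrite cards2 c12 [#|'I_k|]card_ord => h; lia.
rewrite -MD; apply: leq_trans (mxrankM_maxr _ _) _; by rewrite -cS.
Qed.

Section Final.
Variable R : realType.
Local Notation C := (complex R).

Lemma jac_zero_col n (alpha : Rmx R n) (z : 'rV[C]_n) i (e : 'I_(n+n)) :
  z 0 i = 0 -> (e = lshift n i \/ e = rshift n i) ->
  forall d, orbit_jacobian alpha z d e = 0.
Proof.
move=> zi he d; rewrite /orbit_jacobian mxE.
have -> : (fun s : R => realcoord (tact alpha (opsub d s) z) e) = cst 0.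
  apply: funext => s; rewrite /realcoord.
  case: he => ->.
    by rewrite (unsplitK (inl i) : fintype.split (lshift n i) = inl i) /tact mxE zi mulr0.
  by rewrite (unsplitK (inr i) : fintype.split (rshift n i) = inr i) /tact mxE zi mulr0.
exact: derive1_cst.
Qed.

Lemma orbit_nz_eq n (alpha : Rmx R n) (hinv : Rmx_invertible alpha) (z : 'rV[C]_n) :
  (forall i, z 0 i != 0) -> torus_orbit alpha z = torus_orbit alpha (ones R n).
Proof.
move=> hz; rewrite orbit_ones // orbitE //; apply/seteqP; split => y /= h i.
  by have := h i; rewrite (negbTE (hz i)) => ->.
by rewrite (negbTE (hz i)) (negbTE (h i)).
Qed.

End Final.

Theorem lemma2p5 (R : realType) (n : nat) (alpha : Rmx R n) :
  (faithful_rep alpha <-> Rmx_invertible alpha) /\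
  (faithful_rep alpha ->
     finite_set (torus_orbits alpha) /\
     exists z : 'rV[complex R]_n,
       [/\ open (torus_orbit alpha z), closure (torus_orbit alpha z) = setT,
           (forall z' : 'rV[complex R]_n,
              open (torus_orbit alpha z') -> closure (torus_orbit alpha z') = setT ->
              torus_orbit alpha z' = torus_orbit alpha z),
           (forall g h : 'I_n -> complex R, torus R n g -> torus R n h ->
              tact alpha g z = tact alpha h z -> g = h)
         & (forall z' : 'rV[complex R]_n,
              torus_orbit alpha z' <> torus_orbit alpha z -> (2 <= orbit_codim alpha z')%N)]).
Proof.
split.
  by split; [exact: faithful_inv | exact: inv_faithful].
move=> hf; have hinv := faithful_inv hf.
have nz_of : forall z' : 'rV[complex R]_n,
    torus_orbit alpha z' <> torus_orbit alpha (ones R n) -> exists i, z' 0 i = 0.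
  move=> z' hne; apply: contrapT => hall; apply: hne; apply: orbit_nz_eq => // i.
  by apply/eqP => hi; apply: hall; exists i.
split.
  apply: (@sub_finite_set _ _ [set (fun p : {ffun 'I_n -> bool} =>
      [set y : 'rV[complex R]_n | forall i, (y 0 i == 0) = p i]) p | p in setT]).
    move=> O [z _ <-]; exists [ffun i => z 0 i == 0] => //.
    rewrite orbitE //; apply/seteqP; split => y /= h i; by rewrite ?ffunE h ?ffunE.
  exact/finite_image/finite_finset.
exists (ones R n); split.
- rewrite orbit_ones //; exact: open_nz.
- rewrite orbit_ones //; exact: dense_nz.
- move=> z' oz' _; apply: orbit_nz_eq => // i; apply/eqP => zi.
  have zz : torus_orbit alpha z' z' by rewrite orbitE.
  have [y hy yi] := open_has_zero oz' zz zi.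
  by move: hy; rewrite orbitE // => /(_ i); rewrite zi eqxx (negbTE yi).
- move=> g h tg th E; apply: (hf g h tg th); apply/rep_eq => i.
  move/matrixP: E => /(_ 0 i); rewrite /tact !mxE !mulr1; exact: id.
- move=> z' /nz_of [i zi].
  have c12 : lshift n i != rshift n i.
    by apply/eqP => /(congr1 val) /=; have := ltn_ord i; lia.
  have hr := rank_zero_cols c12 (jac_zero_col alpha zi (or_introl erefl))
    (jac_zero_col alpha zi (or_intror erefl)).
  rewrite /orbit_codim /orbit_dim; have := ltn_ord i; lia.
Qed.
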